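(* Let $n\ge 4$ and let $B$ be an $n\times n$ nilpotent matrix over $\mathbb{F}$ with $B^2\neq 0$. Then $\mathcal{P}(\mathcal{N}_B)\subsetneq \mathcal{P}(n)$, i.e. there exists a partition $\underline{\mu}$ of $n$ such that no nilpotent matrix of shape $\underline{\mu}$ commutes with $B$.
   Context: $\mathbb{F}$ is an algebraically closed field of characteristic $0$. A partition of $n$ is a nonincreasing sequence of positive integers summing to $n$; $\mathcal{P}(n)$ denotes the set of all partitions of $n$. For a nilpotent matrix $A$, its shape $\mathrm{sh}(A)$ is the partition of $n$ given by the sizes of the Jordan blocks of its Jordan canonical form. For a nilpotent $n\times n$ matrix $B$, $\mathcal{N}_B$ is the set of all nilpotent $n\times n$ matrices $A$ with $AB=BA$, and $\mathcal{P}(\mathcal{N}_B)=\{\mathrm{sh}(A): A\in\mathcal{N}_B\}$. *)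

(* Defs.v *)
From HB Require Import structures.
From mathcomp Require Import all_boot all_algebra.
Set Implicit Arguments. Unset Strict Implicit. Unset Printing Implicit Defensive.
Import GRing.Theory.
Local Open Scope ring_scope.

Definition is_partition (n : nat) (mu : seq nat) : bool :=
  [&& sorted geq mu, all (fun k => 0 < k)%N mu & sumn mu == n].

Definition nilpotent_mx (F : pzRingType) (n : nat) (A : 'M[F]_n) : Prop :=
  exists k : nat, A ^+ k = 0.

(* Partial sums mu_1, mu_1+mu_2, ..., i.e. the block boundaries. *)
Definition block_ends (mu : seq nat) : seq nat :=
  [seq sumn (take k mu) | k <- iota 1 (size mu)].

(* The nilpotent Jordan matrix with Jordan blocks of sizes mu_1, mu_2, ...
   (in this order along the diagonal, ones on the superdiagonal inside
   each block). *)
Definition jordan_nil_mx (F : pzRingType) (n : nat) (mu : seq nat) : 'M[F]_n :=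
  \matrix_(i < n, j < n)
    ((j == i.+1 :> nat) && (i.+1 \notin block_ends mu))%:R.

Definition has_shape (F : fieldType) (n : nat) (A : 'M[F]_n) (mu : seq nat) : Prop :=
  is_partition n mu /\
  exists2 P : 'M[F]_n, P \in unitmx & A = invmx P *m jordan_nil_mx F n mu *m P.

(* Main.v *)
Require Import Defs.
From HB Require Import structures.
From mathcomp Require Import all_boot all_algebra.
From Stdlib Require Import Classical.
From mathcomp Require Import zify.
Set Implicit Arguments. Unset Strict Implicit. Unset Printing Implicit Defensive.
Import GRing.Theory.
Local Open Scope ring_scope.

Section Aux.
Variable F : fieldType.

Definition shiftmx N : 'M[F]_N.+1 := \matrix_(i, j) ((j : nat) == i.+1)%:R.

Lemma conj_exp n (Q M : 'M[F]_n) m : Q \in unitmx ->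
  (Q *m M *m invmx Q) ^+ m = Q *m M ^+ m *m invmx Q.
Proof.
move=> Qu; elim: m => [|m IH]; first by rewrite !expr0 mulmx1 mulmxV.
rewrite exprS IH exprS -!mulmxE !mulmxA mulmxKV //.
Qed.

Lemma conj_exp' n (Q M : 'M[F]_n) m : Q \in unitmx ->
  (invmx Q *m M *m Q) ^+ m = invmx Q *m M ^+ m *m Q.
Proof.
move=> Qu; have Qu' : invmx Q \in unitmx by rewrite unitmx_inv.
have := conj_exp M m Qu'; by rewrite invmxK.
Qed.

Lemma jordan_n N : jordan_nil_mx F N.+1 [:: N.+1] = shiftmx N.
Proof.
apply/matrixP => i j; rewrite !mxE /block_ends /= addn0 inE.
case: eqP => //= hj; have := ltn_ord j; rewrite hj; case: eqP => // ->; by rewrite ltnn.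
Qed.

Lemma sum_pick N (G : 'I_N.+1 -> F) (k : nat) :
  \sum_(l < N.+1) ((l : nat) == k)%:R * G l = if (k < N.+1)%N then G (inord k) else 0.
Proof.
case: ifP => hk.
  rewrite (bigD1 (inord k)) //= inordK // eqxx mul1r big1 ?addr0 // => l hl.
  case: eqP => [hlk|]; last by rewrite mul0r.
  by move: hl; rewrite -hlk inord_val eqxx.
rewrite big1 // => l _; case: eqP => [hlk|]; last by rewrite mul0r.
by move: hk; rewrite -hlk ltn_ord.
Qed.

Lemma sum_pickr N (G : 'I_N.+1 -> F) (k : nat) :
  \sum_(l < N.+1) G l * ((l : nat) == k)%:R = if (k < N.+1)%N then G (inord k) else 0.
Proof. rewrite -sum_pick; apply: eq_bigr => l _; exact: mulrC. Qed.

Lemma shift_exp N m (i j : 'I_N.+1) : (shiftmx N ^+ m) i j = ((j : nat) == i + m)%N%:R.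
Proof.
elim: m i j => [|m IH] i j.
  by rewrite expr0 !mxE addn0 -val_eqE /= eq_sym.
rewrite exprSr -mulmxE mxE.
under eq_bigr => l _ do rewrite IH mxE.
rewrite (eq_bigr (fun l : 'I_N.+1 => ((l : nat) == (i + m)%N)%:R * ((j : nat) == (i + m).+1)%:R)).
  rewrite sum_pick addnS; case: ifP => h; first by [].
  case: eqP => // hj; have := ltn_ord j; rewrite hj; move/negbT: h; rewrite -leqNgt; lia.
by move=> l _; case: eqP => [->|]; rewrite ?mul0r.
Qed.

Definition Sh N (c : nat -> bool) : 'M[F]_N.+1 :=
  \matrix_(i, j) (((j : nat) == i.+1) && c i.+1)%:R.

Lemma shiftE N : shiftmx N = Sh N (fun _ => true).
Proof. by apply/matrixP => i j; rewrite !mxE andbT. Qed.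

Lemma jordanE N : jordan_nil_mx F N.+1 [:: N; 1] = Sh N (fun k => k != N).
Proof.
apply/matrixP => i j; rewrite !mxE /block_ends /= !addn0 addn1 !inE.
case: eqP => //= hj; have := ltn_ord j; rewrite hj => hi.
by rewrite (ltn_eqF hi) orbF.
Qed.

Lemma nat_sh_eq (x y : nat) (c : nat -> bool) :
  ((x == y.+1) && c y.+1) = ((y == x.-1) && ((0 < x)%N && c x)).
Proof. case: x => [|x] /=; first by rewrite andbF. by rewrite eqSS eq_sym; case: eqP => [->|]. Qed.

Lemma mulSh N c (M : 'M[F]_N.+1) i (j : 'I_N.+1) :
  (M *m Sh N c) i j = if (0 < j)%N && c j then M i (inord j.-1) else 0.
Proof.
rewrite mxE (eq_bigr (fun l : 'I_N.+1 => M i l * ((l : nat) == j.-1)%:R * ((0 < j)%N && c j)%:R)); last first.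
  by move=> l _; rewrite mxE nat_sh_eq; case: ((0 < j)%N && c j); rewrite ?andbT ?andbF ?mulr1 ?mulr0.
rewrite -big_distrl /= sum_pickr.
have -> : (j.-1 < N.+1)%N by have := ltn_ord j; lia.
by case: ((0 < j)%N && c j); rewrite ?mulr1 ?mulr0.
Qed.

Lemma Shmul N c (M : 'M[F]_N.+1) (i : 'I_N.+1) j :
  (Sh N c *m M) i j = if (i.+1 < N.+1)%N && c i.+1 then M (inord i.+1) j else 0.
Proof.
rewrite mxE (eq_bigr (fun l : 'I_N.+1 => ((l : nat) == i.+1)%:R * M l j * (c i.+1)%:R)); last first.
  by move=> l _; rewrite mxE; case: (c _); rewrite ?andbT ?andbF ?mulr1 ?mulr0 ?mul0r.
rewrite -big_distrl /= sum_pick; case: (c i.+1); rewrite ?mulr1 ?mulr0 ?andbT ?andbF //.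
Qed.

Lemma toep (g : nat -> nat -> F) L :
  (forall i j, (i < L)%N -> (j < L)%N -> g i.+1 j.+1 = g i j) ->
  (forall i, (i < L)%N -> g i.+1 0%N = 0) ->
  forall i j, (i <= L)%N -> (j <= L)%N -> g i j = if (i <= j)%N then g 0%N (j - i)%N else 0.
Proof.
move=> h1 h2; elim=> [|i IH] j hi hj; first by rewrite subn0.
case: j hj => [|j] hj; first by rewrite h2.
by rewrite h1 // IH ?ltnS ?subSS; [| apply: ltnW | apply: ltnW].
Qed.

Lemma eigrow n (M : 'M[F]_n) r c : row r M = c *: delta_mx 0 r ->
  (exists k, M ^+ k = 0) -> c = 0.
Proof.
move=> hr [k hk].
have h : forall m, row r (M ^+ m) = c ^+ m *: delta_mx 0 r.
  elim=> [|m IH]; first by rewrite !expr0 row1 scale1r.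
  by rewrite exprSr -mulmxE row_mul IH -scalemxAl -rowE hr scalerA -exprSr.
have := h k; rewrite hk row0 => /esym/eqP; rewrite scaler_eq0 => /orP[/eqP|].
  by move/eqP; rewrite expf_eq0 => /andP[_ /eqP].
by move/eqP/matrixP => /(_ 0 r); rewrite !mxE !eqxx => /eqP; rewrite oner_eq0.
Qed.

Lemma rank_rowsub m m' n (f : 'I_m' -> 'I_m) (A : 'M[F]_(m, n)) :
  (\rank (rowsub f A) <= \rank A)%N.
Proof. by rewrite rowsubE mxrankM_maxr. Qed.

Lemma rank_colsub m n n' (g : 'I_n' -> 'I_n) (A : 'M[F]_(m, n)) :
  (\rank (colsub g A) <= \rank A)%N.
Proof. have -> : colsub g A = A *m colsub g 1%:M by rewrite mulmx_colsub mulmx1. exact: mxrankM_maxl. Qed.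

Lemma rank_stair K (M : 'M[F]_K.+1) (p d : nat) : (p + d <= K.+1)%N ->
  (forall a : nat, (a < p)%N -> M (inord a) (inord (a + d)) != 0) ->
  (forall a b : nat, (a < p)%N -> (b < a + d)%N -> M (inord a) (inord b) = 0) ->
  (p <= \rank M)%N.
Proof.
move=> hpd hdiag hzero.
set T := mxsub (fun a : 'I_p => inord a) (fun b : 'I_p => inord (b + d)) M.
have rT : (\rank T <= \rank M)%N.
  rewrite /T mxsubrc; apply: leq_trans (rank_rowsub _ _) _; exact: rank_colsub.
suff uT : T \in unitmx by rewrite -(mxrank_unit uT).
rewrite -unitmx_tr unitmxE det_trig; last first.
  apply/is_trig_mxP => i j ij; rewrite !mxE; apply: hzero => //; lia.
rewrite unitfE; apply/prodf_neq0 => i _; rewrite !mxE; exact: hdiag.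
Qed.

Lemma rank_rows_supp K n (M : 'M[F]_(K.+1, n)) (s q : nat) :
  (forall (i : 'I_K.+1) j, ~~ ((s <= i) && (i < s + q))%N -> M i j = 0) ->
  (\rank M <= q)%N.
Proof.
move=> hM.
pose M' := \matrix_(b < q, j < n) M (inord (b + s)) j.
pose L : 'M[F]_(K.+1, q) := \matrix_(i < K.+1, b < q) ((i : nat) == b + s)%N%:R.
have -> : M = L *m M'.
  apply/matrixP => i j; rewrite !mxE.
  case: (boolP ((s <= i) && (i < s + q))%N) => hi.
    have hb : (i - s < q)%N by lia.
    rewrite (bigD1 (Ordinal hb)) //= !mxE /= subnK; last by case/andP: hi.
    rewrite eqxx mul1r inord_val big1 ?addr0 // => b hb'; rewrite !mxE.
    case: eqP => [hib|]; last by rewrite mul0r.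
    by move: hb'; rewrite -val_eqE /= hib addnK eqxx.
  rewrite hM // big1 // => b _; rewrite !mxE; case: eqP => [hib|]; last by rewrite mul0r.
  by move: hi; rewrite hib; have := ltn_ord b; lia.
by apply: leq_trans (mxrankM_maxr _ _) (rank_leq_row _).
Qed.

Lemma rank_cols_supp m K (M : 'M[F]_(m, K.+1)) (s q : nat) :
  (forall i (j : 'I_K.+1), ~~ ((s <= j) && (j < s + q))%N -> M i j = 0) ->
  (\rank M <= q)%N.
Proof.
move=> hM; rewrite -mxrank_tr; apply: (@rank_rows_supp _ _ _ s) => i j h; by rewrite mxE hM.
Qed.

Lemma Rside N (B R : 'M[F]_N.+1) : R ^+ N != 0 -> R ^+ N.+1 = 0 ->
  R *m B = B *m R -> (exists k, B ^+ k = 0) -> B ^+ 2 != 0 ->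
  (\rank (B ^+ 2) + N.+1 <= 2 * \rank B)%N.
Proof.
move=> RN RN1 RB nB B2.
have [r hr] : exists r, row r (R ^+ N) != 0.
  case: (pickP (fun r => row r (R ^+ N) != 0)) => [r hr|h]; first by exists r.
  case/eqP: RN; apply/row_matrixP => i; rewrite row0; exact/eqP/negbFE/h.
pose v : 'rV[F]_N.+1 := delta_mx 0 r.
have vRN : v *m R ^+ N != 0 by rewrite -rowE.
have Rk0 : forall m, (N < m)%N -> R ^+ m = 0.
  by move=> m hm; rewrite -(subnK hm) exprD RN1 mulr0.
have RD : forall a b, R ^+ a *m R ^+ b = R ^+ (a + b) by move=> a b; rewrite exprD mulmxE.
pose V : 'M[F]_N.+1 := \matrix_(i < N.+1) (v *m R ^+ i).
have rowV : forall i, row i V = v *m R ^+ i by move=> i; rewrite rowK.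
have VR : V *m R = shiftmx N *m V.
  apply/row_matrixP => i; rewrite row_mul rowV -mulmxA.
  have -> : R ^+ i *m R = R ^+ i.+1 by rewrite exprSr mulmxE.
  apply/rowP => j; rewrite [in RHS]mxE shiftE Shmul andbT; case: ifP => h.
    by have := rowV (inord i.+1); rewrite inordK // => <-; rewrite mxE.
  rewrite Rk0 ?mulmx0 ?mxE //; move/negbT: h; rewrite -leqNgt ltnS; lia.
have Vu : V \in unitmx.
  rewrite -row_free_unit -kermx_eq0; apply/rowV0P => w /sub_kermxP wV.
  case: (eqVneq w 0) => // wn0; exfalso.
  have [j hj] : exists j, w 0 j != 0.
    case: (pickP (fun j => w 0 j != 0)) => [j hj|h]; first by exists j.
    case/eqP: wn0; apply/rowP => j; rewrite mxE; exact/eqP/negbFE/h.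
  have ex : exists k, (k < N.+1)%N && (w 0 (inord k) != 0).
    by exists j; rewrite ltn_ord inord_val.
  case: (ex_minnP ex) => i0 /andP[hi0 wi0] hmin.
  have : w *m V *m R ^+ (N - i0) = 0 by rewrite wV mul0mx.
  rewrite (mulmx_sum_row w V) mulmx_suml (bigD1 (inord i0)) //= big1 ?addr0.
    rewrite rowV -scalemxAl -mulmxA RD inordK // subnKC; last by rewrite -ltnS.
    by move/eqP; rewrite scaler_eq0 (negbTE wi0) (negbTE vRN).
  move=> i hi; rewrite rowV -scalemxAl -mulmxA RD.
  case: (ltngtP i i0) => h.
  - suff -> : w 0 i = 0 by rewrite scale0r.
    apply/eqP; apply: contraTT h => hw; rewrite -leqNgt hmin // ltn_ord inord_val.
    by [].
  - by rewrite Rk0 ?mulmx0 ?scaler0 //; lia.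
  - by move: hi; rewrite -val_eqE /= inordK // h eqxx.
pose B' := V *m B *m invmx V.
have SV : shiftmx N = V *m R *m invmx V by rewrite VR mulmxK.
have BS : B' *m shiftmx N = shiftmx N *m B'.
  by rewrite SV /B' !mulmxA !(mulmxKV Vu) -(mulmxA V B R) -RB !mulmxA.
have cB : forall m, B' ^+ m = V *m B ^+ m *m invmx V by move=> m; rewrite conj_exp.
have rB : forall m, \rank (B' ^+ m) = \rank (B ^+ m).
  move=> m; rewrite cB mxrankMfree ?row_free_unit ?unitmx_inv //.
  by rewrite eqmxMfull // row_full_unit.
have nB' : exists k, B' ^+ k = 0.
  by case: nB => k Bk; exists k; rewrite cB Bk mulmx0 mul0mx.
have B'2 : B' ^+ 2 != 0 by rewrite -mxrank_eq0 rB mxrank_eq0.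
rewrite shiftE in BS.
pose g : nat -> nat -> F := fun i j => B' (inord i) (inord j).
have gdef : forall i j, g i j = B' (inord i) (inord j) by [].
clearbody g.
have gE : forall (i j : 'I_N.+1), B' i j = g i j by move=> i j; rewrite gdef !inord_val.
have hT : forall i j, (i <= N)%N -> (j <= N)%N ->
    g i j = if (i <= j)%N then g 0%N (j - i)%N else 0.
  apply: toep.
    move=> i j hi hj; have := congr1 (fun M : 'M[F]_N.+1 => M (inord i) (inord j.+1)) BS.
    have hi' : (i < N.+1)%N by rewrite ltnS ltnW.
    have hj' : (j.+1 < N.+1)%N by [].
    rewrite /= mulSh Shmul !andbT (inordK hj') (inordK hi') /= ltnS hi.
    by move=> h; rewrite !gdef h.
  move=> i hi; have := congr1 (fun M : 'M[F]_N.+1 => M (inord i) (inord 0)) BS.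
  have hi' : (i < N.+1)%N by rewrite ltnS ltnW.
  rewrite /= mulSh Shmul !andbT (inordK hi') inordK //= ltnS hi.
  by move=> h; rewrite !gdef -h.
have hrow : row ord_max B' = g 0%N 0%N *: delta_mx 0 ord_max.
  apply/rowP => j; rewrite [LHS]mxE gE hT ?leq_ord //= !mxE eqxx /=.
  have := leq_ord j; rewrite leq_eqVlt => /orP[/eqP hj|hj].
    by rewrite -val_eqE /= hj leqnn subnn eqxx mulr1.
  by rewrite leqNgt hj /= -val_eqE /= (ltn_eqF hj) mulr0.
have c0 : g 0%N 0%N = 0 := eigrow hrow nB'.
have exk : exists d, (d <= N)%N && (g 0%N d != 0).
  case: (pickP (fun d : 'I_N.+1 => g 0%N d != 0)) => [d hd|h].
    by exists d; rewrite leq_ord.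
  exfalso; move: B'2; suff -> : B' = 0 by rewrite expr2 mul0r eqxx.
  apply/matrixP => i j; rewrite gE hT ?leq_ord // mxE; case: ifP => // _.
  have := h (inord (j - i)); rewrite inordK; last by have := ltn_ord j; lia.
  by move/negbFE/eqP.
case: (ex_minnP exk) => k /andP[kN ck] kmin.
have hzero : forall d, (d < k)%N -> g 0%N d = 0.
  move=> d hd; apply/eqP; apply/negPn/negP => hn.
  by have := kmin d; rewrite hn andbT => /(_ (leq_trans (ltnW hd) kN)); rewrite leqNgt hd.
have k0 : (0 < k)%N by case: k ck {kmin hzero kN} => //; rewrite c0 eqxx.
have r1 : (N.+1 - k <= \rank B')%N.
  apply: (@rank_stair _ _ (N.+1 - k) k) => [|a ha|a b ha hb]; first by lia.
    rewrite -gdef.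
    by rewrite hT ?leq_addr ?addKn //; lia.
  rewrite -gdef.
  rewrite hT; [|lia|lia]; case: ifP => // hab; apply: hzero; lia.
have r2 : (\rank (B' ^+ 2) <= N.+1 - 2 * k)%N.
  apply: (@rank_cols_supp _ _ _ (2 * k)) => i j hj.
  have jlt : (j < 2 * k)%N by move: hj; have := ltn_ord j; lia.
  rewrite expr2 -mulmxE mxE big1 // => l _.
  rewrite !gE (hT i l) ?leq_ord // (hT l j) ?leq_ord //.
  case: ifP => h1; last by rewrite mul0r.
  case: ifP => h2; last by rewrite mulr0.
  case: (ltnP (l - i) k) => h3; first by rewrite hzero // mul0r.
  by rewrite (hzero (j - l)%N) ?mulr0 //; lia.
have rB2 : (0 < \rank (B ^+ 2))%N by rewrite lt0n mxrank_eq0.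
have rB1 := rB 1%N; rewrite !expr1 in rB1.
move: r1 r2 rB2; rewrite rB rB1; lia.
Qed.

Lemma Jside N (X : 'M[F]_N.+1) : (3 <= N)%N ->
  X *m jordan_nil_mx F N.+1 [:: N; 1] = jordan_nil_mx F N.+1 [:: N; 1] *m X ->
  (exists k, X ^+ k = 0) -> X ^+ 2 != 0 ->
  (2 * \rank X < \rank (X ^+ 2) + N.+1)%N.
Proof.
move=> N3 XJ nX X2; rewrite jordanE in XJ.
pose g : nat -> nat -> F := fun i j => X (inord i) (inord j).
have gdef : forall i j, g i j = X (inord i) (inord j) by [].
clearbody g.
have gE : forall (i j : 'I_N.+1), X i j = g i j by move=> i j; rewrite gdef !inord_val.
have hXJ : forall i j, (i <= N)%N -> (j <= N)%N ->
    (if (0 < j)%N && (j != N) then g i j.-1 else 0) = (if (i.+1 < N)%N then g i.+1 j else 0).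
  move=> i j hi hj; have := congr1 (fun M : 'M[F]_N.+1 => M (inord i) (inord j)) XJ.
  have hi' : (i < N.+1)%N by rewrite ltnS.
  have hj' : (j < N.+1)%N by rewrite ltnS.
  rewrite /= mulSh Shmul (inordK hi') (inordK hj').
  have -> : ((i.+1 < N.+1)%N && (i.+1 != N)) = (i.+1 < N)%N.
    by rewrite [in RHS]ltn_neqAle andbC.
  by rewrite !gdef.
have hT : forall i j, (i <= (N - 1)%N)%N -> (j <= (N - 1)%N)%N ->
    g i j = if (i <= j)%N then g 0%N (j - i)%N else 0.
  apply: toep.
    move=> i j hi hj.
    have h := hXJ i j.+1 ltac:(lia) ltac:(lia).
    have e1 : (j.+1 != N) by lia.
    have e2 : (i.+1 < N)%N by lia.
    by rewrite e1 e2 /= in h; rewrite h.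
  move=> i hi.
  have h := hXJ i 0%N ltac:(lia) ltac:(lia).
  have e2 : (i.+1 < N)%N by lia.
  by rewrite e2 /= in h; rewrite h.
have hcolN : forall i, (0 < i)%N -> (i <= (N - 1)%N)%N -> g i N = 0.
  move=> i i0 hi.
  have h := hXJ i.-1 N ltac:(lia) ltac:(lia).
  have e2 : (i.-1.+1 < N)%N by lia.
  by rewrite eqxx andbF e2 prednK // in h; rewrite h.
have hlast : forall r j, ((N - 1)%N <= r <= N)%N -> (j <= N - 2)%N -> g r j = 0.
  move=> r j /andP[h1 h2] hj.
  have h := hXJ r j.+1 ltac:(lia) ltac:(lia).
  have e1 : (j.+1 != N) by lia.
  have e2 : (r.+1 < N)%N = false by lia.
  by rewrite e1 e2 /= in h; rewrite -h.
pose u : 'rV[F]_N.+1 := delta_mx 0 (inord (N - 1)%N).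
have hrow1 : row (inord (N - 1)%N) X = g 0%N 0%N *: u.
  apply/rowP => j; rewrite [LHS]mxE gE inordK; last by lia.
  rewrite !mxE eqxx /= -val_eqE /= inordK; last by lia.
  have := leq_ord j; rewrite leq_eqVlt => /orP[/eqP hj|hj].
    rewrite hj hcolN; [|lia|lia].
    by rewrite (_ : (N == (N - 1)%N) = false) ?mulr0 //; apply/eqP; lia.
  case: (eqVneq (j : nat) (N - 1)%N) => hj1.
    by rewrite hj1 hT ?leqnn // subnn /= mulr1.
  by rewrite /= mulr0 hlast //; lia.
have c0 : g 0%N 0%N = 0 := eigrow hrow1 nX.
pose w : 'rV[F]_N.+1 := delta_mx 0 (inord N).
have uX : u *m X = 0 by rewrite -rowE hrow1 c0 scale0r.
have wX : w *m X = g N (N - 1)%N *: u + g N N *: w.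
  have iN1 : ((N - 1)%N < N.+1)%N by lia.
  have iN : (N < N.+1)%N by [].
  apply/rowP => j; rewrite -rowE [LHS]mxE gE (inordK iN) !mxE !eqxx /= -!val_eqE /=.
  rewrite (inordK iN1) (inordK iN).
  have := leq_ord j; rewrite leq_eqVlt => /orP[/eqP hj|hj].
    rewrite hj ?eqxx (_ : (N == (N - 1)%N) = false) /= ?mulr0 ?mulr1 ?add0r //; apply/eqP; lia.
  case: (eqVneq (j : nat) (N - 1)%N) => hj1.
    rewrite hj1 ?eqxx (_ : ((N - 1)%N == N) = false) /= ?mulr0 ?mulr1 ?addr0 //; apply/eqP; lia.
  rewrite hlast; [|lia|lia].
  rewrite (_ : (j == N :> nat) = false) /= ?mulr0 ?addr0 //; apply/eqP; lia.
have wXm : forall m, exists al, w *m X ^+ m = al *: u + g N N ^+ m *: w.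
  elim=> [|m [al IH]]; first by exists 0; rewrite expr0 mulmx1 scale0r add0r scale1r.
  exists (g N N ^+ m * g N (N - 1)%N).
  rewrite exprSr -mulmxE mulmxA IH mulmxDl -!scalemxAl uX wX scaler0 add0r.
  by rewrite scalerDr !scalerA exprSr.
have b0 : g N N = 0.
  case: nX => K hK; case: (wXm K) => al; rewrite hK mulmx0 => /esym/rowP/(_ (inord N)).
  rewrite !mxE !eqxx /= -!val_eqE /= !inordK //; last by lia.
  rewrite (_ : (N == (N - 1)%N) = false) ?mulr0 ?add0r ?mulr1; last by lia.
  by move/eqP; rewrite expf_eq0 => /andP[_ /eqP].
have hrowN : forall j, (j <= N)%N -> j != (N - 1)%N -> g N j = 0.
  move=> j hj hj1; case: (ltnP j (N - 1)%N) => h; first by apply: hlast => //; lia.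
  have -> : j = N by lia.
  exact: b0.
have ext : exists d, (0 < d)%N && ((g 0%N d != 0) || (d == N - 2)%N).
  by exists (N - 2)%N; rewrite eqxx orbT andbT; lia.
case: (ex_minnP ext) => t /andP[t0 ht] tmin.
have tN : (t <= N - 2)%N by apply: tmin; rewrite eqxx orbT andbT; lia.
have hzero : forall d, (d < t)%N -> g 0%N d = 0.
  move=> d hd; case: (posnP d) => [->|dpos]; first exact: c0.
  apply/eqP; apply/negPn/negP => hn.
  by have := tmin d; rewrite dpos hn /= => /(_ isT); rewrite leqNgt hd.
have rX : (\rank X <= N - t)%N.
  pose E0 : 'M[F]_N.+1 := \matrix_(i, j) (if (i == 0 :> nat) then X i j else 0).
  pose X1 : 'M[F]_N.+1 := \matrix_(i, j) (if (i == 0 :> nat) then 0 else X i j).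
  have -> : X = E0 + X1.
    by apply/matrixP => i j; rewrite !mxE; case: ifP; rewrite ?addr0 ?add0r.
  apply: leq_trans (mxrank_add _ _) _.
  have r0 : (\rank E0 <= 1)%N.
    apply: (@rank_rows_supp _ _ _ 0) => i j hi; rewrite mxE.
    by rewrite (_ : (i == 0 :> nat) = false) //; lia.
  have r1 : (\rank X1 <= (N - 1)%N - t)%N.
    apply: (@rank_cols_supp _ _ _ t.+1) => i j hj; rewrite mxE.
    case: ifP => // /negbT hi0; rewrite gE.
    have := leq_ord i; rewrite leq_eqVlt => /orP[/eqP hi|hi].
      rewrite hi hrowN //; [by apply: leq_ord | lia].
    have := leq_ord j; rewrite leq_eqVlt => /orP[/eqP hj'|hj'].
      by rewrite hj' hcolN //; lia.
    rewrite hT; [|lia|lia]; case: ifP => // hij; apply: hzero; lia.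
  lia.
have rX2pos : (0 < \rank (X ^+ 2))%N by rewrite lt0n mxrank_eq0.
have X2E : forall a b : nat, (a <= N)%N -> (b <= N)%N ->
    (X ^+ 2) (inord a) (inord b) = \sum_(l < N.+1) g a l * g l b.
  move=> a b ha hb; rewrite expr2 -mulmxE mxE; apply: eq_bigr => l _.
  by rewrite !gE !inordK // ltnS.
case: (boolP ((g 0%N t != 0) && (2 * t + 2 <= N)%N)) => [/andP[ct tt]|hcase]; last first.
  have : (N <= 2 * t + 1)%N.
    move: hcase; rewrite negb_and => /orP[/negPn/eqP hc|hc]; last by lia.
    by move: ht; rewrite hc eqxx /= => /eqP ht; lia.
  lia.
have r2 : (N - 2 * t <= \rank (X ^+ 2))%N.
  apply: (@rank_stair _ _ (N - 2 * t) (2 * t)) => [|a ha|a b ha hb]; first by lia.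
    rewrite X2E; [|lia|lia].
    have hl0 : (a + t < N.+1)%N by lia.
    rewrite (bigD1 (Ordinal hl0)) //= big1 ?addr0.
      rewrite (hT a) ?(hT (a + t)); [|lia|lia|lia|lia].
      rewrite !leq_addr (_ : (a + t <= a + 2 * t)%N) ?addKn; last by lia.
      rewrite (_ : (a + 2 * t - (a + t) = t)%N); last by lia.
      by rewrite mulf_neq0.
    move=> l hl; have hl' : (l : nat) != (a + t)%N by move: hl; rewrite -val_eqE.
    have := leq_ord l; rewrite leq_eqVlt => /orP[/eqP hlN|hlN].
      rewrite hlN.
      case: (ltnP (a + 2 * t) (N - 1)%N) => hab.
        by rewrite hrowN ?mulr0 //; lia.
      by rewrite hcolN ?mul0r //; lia.
    rewrite (hT a l) ?(hT l (a + 2 * t)); [|lia|lia|lia|lia].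
    case: ifP => h1; last by rewrite mul0r.
    case: ifP => h2; last by rewrite mulr0.
    case: (ltnP (l - a) t) => h3; first by rewrite hzero // mul0r.
    by rewrite (hzero (a + 2 * t - l)%N) ?mulr0 //; lia.
  rewrite X2E; [|lia|lia].
  rewrite big1 // => l _.
  have := leq_ord l; rewrite leq_eqVlt => /orP[/eqP hlN|hlN].
    by rewrite hlN hrowN ?mulr0 //; lia.
  rewrite (hT a l) ?(hT l b); [|lia|lia|lia|lia].
  case: ifP => h1; last by rewrite mul0r.
  case: ifP => h2; last by rewrite mulr0.
  case: (ltnP (l - a) t) => h3; first by rewrite hzero // mul0r.
  by rewrite (hzero (b - l)%N) ?mulr0 //; lia.
lia.
Qed.

End Aux.

Theorem lemma2p2 (F : closedFieldType) (hF : has_pchar0 F) (n : nat)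
  (hn : (4 <= n)%N) (B : 'M[F]_n) (hB : nilpotent_mx B) (hB2 : B ^+ 2 != 0) :
  exists mu : seq nat, is_partition n mu /\
    forall A : 'M[F]_n, nilpotent_mx A -> A *m B = B *m A -> ~ has_shape A mu.
Proof.
case: n hn B hB hB2 => [//|N] hn B hB hB2.
have N3 : (3 <= N)%N by [].
case: (classic (exists R : 'M[F]_N.+1,
   [/\ R ^+ N != 0, R ^+ N.+1 = 0 & R *m B = B *m R])) => [[R [RN RN1 RB]]|nH].
- exists [:: N; 1]; split.
    by rewrite /is_partition /= addn0 addn1 eqxx andbT; case: N N3 hn {B hB hB2 R RN RN1 RB}.
  move=> A nA AB [_ [P Pu defA]].
  set X := P *m B *m invmx P.
  have XJ : X *m jordan_nil_mx F N.+1 [:: N; 1] = jordan_nil_mx F N.+1 [:: N; 1] *m X.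
    have hPA : P *m A = jordan_nil_mx F N.+1 [:: N; 1] *m P.
      by rewrite defA !mulmxA (mulmxV Pu) mul1mx.
    have hAP : A *m invmx P = invmx P *m jordan_nil_mx F N.+1 [:: N; 1].
      by rewrite defA (mulmxK Pu).
    rewrite /X -!mulmxA -hAP (mulmxA B) -AB !mulmxA hPA.
    done.
  have rX : forall m, \rank (X ^+ m) = \rank (B ^+ m).
    move=> m; rewrite /X conj_exp // mxrankMfree ?row_free_unit ?unitmx_inv //.
    by rewrite eqmxMfull // row_full_unit.
  have nX : exists k, X ^+ k = 0.
    by case: hB => k Bk; exists k; rewrite /X conj_exp // Bk mulmx0 mul0mx.
  have X2 : X ^+ 2 != 0.
    by rewrite -mxrank_eq0 rX mxrank_eq0.
  have h1 := Jside N3 XJ nX X2.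
  have h2 := Rside RN RN1 RB hB hB2.
  have r1 := rX 1%N; rewrite !expr1 in r1.
  move: h1 h2; rewrite !rX r1 => h1 h2; have := leq_ltn_trans h2 h1; by rewrite ltnn.
- exists [:: N.+1]; split; first by rewrite /is_partition /= addn0 eqxx.
  move=> A nA AB [_ [P Pu defA]]; apply: nH; exists A; split => //.
  + rewrite defA conj_exp' // jordan_n.
    apply/negP => /eqP h.
    have : shiftmx F N ^+ N = 0.
      have -> : shiftmx F N ^+ N = P *m (invmx P *m shiftmx F N ^+ N *m P) *m invmx P.
        by rewrite !mulmxA (mulmxV Pu) mul1mx (mulmxK Pu).
      by rewrite h mulmx0 mul0mx.
    move/matrixP => /(_ ord0 ord_max); rewrite shift_exp !mxE /= add0n eqxx.
    by move/eqP; rewrite oner_eq0.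
  + rewrite defA conj_exp' // jordan_n.
    suff -> : shiftmx F N ^+ N.+1 = 0 by rewrite mulmx0 mul0mx.
    apply/matrixP => i j; rewrite shift_exp !mxE.
    by have := ltn_ord j; case: eqP => // ->; lia.
Qed.
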